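(* For all integers $n\ge0$, $p\ge1$ and every real $x$, $$\mathcal{B}_{n,p}(x)=p\int_0^1(1-t)^{p-1}G_{n,x}(t)\,dt,\qquad\text{where } G_{n,x}(t)=\sum_{k=0}^{n}\binom{n}{k}\phi_k(t)\,x^{n-k}.$$
   Context: $S(n,k)$ denotes the Stirling numbers of the second kind and $\phi_n(t)=\sum_{k=0}^nS(n,k)t^k$ the Bell (exponential) polynomials; thus $\sum_{n\ge0}G_{n,x}(t)\frac{z^n}{n!}=\exp(xz+t(e^z-1))$. For an integer $p\ge0$, the $p$-Bell numbers $\mathcal{B}_{n,p}$ are defined by $\sum_{n\ge0}\mathcal{B}_{n,p}\frac{z^n}{n!}=\sum_{n\ge0}\binom{n+p}{p}^{-1}\frac{(e^z-1)^n}{n!}$, and the $p$-Bell polynomials by $\mathcal{B}_{n,p}(x)=\sum_{k=0}^n\binom nk\mathcal{B}_{k,p}x^{n-k}$ (equivalently $\sum_n\mathcal{B}_{n,p}(x)\frac{z^n}{n!}=e^{xz}\sum_{n}\mathcal{B}_{n,p}\frac{z^n}{n!}$). *)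

(* Defs.v *)
From Stdlib Require Import Reals.
From Coquelicot Require Import Coquelicot.
Open Scope R_scope.

Fixpoint stirling2 (n k : nat) : nat :=
  match n, k with
  | O, O => 1%nat
  | O, S _ => 0%nat
  | S _, O => 0%nat
  | S n', S k' => (S k' * stirling2 n' (S k') + stirling2 n' k')%nat
  end.

Definition bell_poly (n : nat) (t : R) : R :=
  sum_f_R0 (fun k => INR (stirling2 n k) * t ^ k) n.

Definition G (n : nat) (x t : R) : R :=
  sum_f_R0 (fun k => Binomial.C n k * bell_poly k t * x ^ (n - k)) n.

(* p-Bell numbers: n! [z^n] sum_k C(k+p,p)^{-1} (e^z-1)^k/k!.
   Since (e^z-1)^k/k! = sum_n S(n,k) z^n/n! (with S(n,k)=0 for k>n),
   the coefficient is B_{n,p} = sum_{k=0}^n S(n,k) / C(k+p,p). *)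
Definition pBell (n p : nat) : R :=
  sum_f_R0 (fun k => INR (stirling2 n k) / Binomial.C (k + p) p) n.

Definition pBell_poly (n p : nat) (x : R) : R :=
  sum_f_R0 (fun k => Binomial.C n k * pBell k p * x ^ (n - k)) n.

(* Main.v *)
Require Import Defs.
From Stdlib Require Import Reals.
From Coquelicot Require Import Coquelicot.
From Stdlib Require Import Lia Lra Factorial.
Open Scope R_scope.

Lemma iR_val (f : R -> R) a b (v w : R) : is_RInt f a b v -> @eq R v w -> is_RInt f a b w.
Proof. intros H ->; exact H. Qed.

Lemma iR_ext (f g : R -> R) a b v :
  (forall x, Rmin a b < x < Rmax a b -> f x = g x) -> is_RInt f a b v -> is_RInt g a b v.
Proof. apply is_RInt_ext. Qed.

Lemma iR_scal (f : R -> R) a b c v : is_RInt f a b v ->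
  is_RInt (fun t => c * f t) a b (c * v).
Proof. intro H. exact (is_RInt_scal f a b c v H). Qed.

Lemma iR_minus (f g : R -> R) a b u v : is_RInt f a b u -> is_RInt g a b v ->
  is_RInt (fun t => f t - g t) a b (u - v).
Proof. intros H1 H2. exact (is_RInt_minus f g a b u v H1 H2). Qed.

Lemma iR_plus (f g : R -> R) a b u v : is_RInt f a b u -> is_RInt g a b v ->
  is_RInt (fun t => f t + g t) a b (u + v).
Proof. intros H1 H2. exact (is_RInt_plus f g a b u v H1 H2). Qed.

Lemma iR_sum (f : nat -> R -> R) (v : nat -> R) a b N :
  (forall k, is_RInt (f k) a b (v k)) ->
  is_RInt (fun t => sum_f_R0 (fun k => f k t) N) a b (sum_f_R0 v N).
Proof.
  intro H. induction N as [|N IH]; simpl.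
  - apply H.
  - apply iR_plus; auto.
Qed.

Lemma sum_scal c (f : nat -> R) N : c * sum_f_R0 f N = sum_f_R0 (fun k => c * f k) N.
Proof. induction N; simpl; [ring|rewrite <- IHN; ring]. Qed.

Lemma basic k : forall q, is_RInt (fun t => (1-t)^q * t^k) 0 1
  (INR (fact k) * INR (fact q) / INR (fact (k+q+1))).
Proof.
  induction k as [|k IH]; intro q.
  - set (F := fun t => - (1-t)^(S q) / INR (S q)).
    assert (H : is_RInt (fun t => (1-t)^q) 0 1 (F 1 - F 0)).
    { apply (is_RInt_derive F (fun t => (1-t)^q) 0 1).
      + intros t _. unfold F. auto_derive; auto.
        change (match q with 0%nat => 1 | S _ => INR q + 1 end) with (INR (S q)).
        simpl pred. set (c := INR (S q)). replace (1 + - t) with (1 - t) by ring. unfold c. field. apply not_0_INR. lia.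
      + intros t _. apply (@ex_derive_continuous R_AbsRing R_NormedModule). auto_derive. auto. }
    eapply iR_ext; [|eapply iR_val; [exact H|]].
    + intros; simpl; ring.
    + unfold F. rewrite Nat.add_0_l, Nat.add_1_r. simpl pow. simpl fact at 1.
      rewrite fact_simpl, mult_INR. 
      assert (INR (fact q) <> 0) by apply INR_fact_neq_0.
      assert (INR (S q) <> 0) by (apply not_0_INR; lia).
      replace (1-1) with 0 by ring. replace (1-0) with 1 by ring. rewrite pow1.
      rewrite INR_1. field. auto.
  - set (F := fun t => t^(S k) * (1-t)^(S q)).
    set (dF := fun t => INR (S k) * ((1-t)^(S q) * t^k) - INR (S q) * ((1-t)^q * t^(S k))).
    assert (H : is_RInt dF 0 1 (F 1 - F 0)).
    { apply (is_RInt_derive F dF 0 1).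
      + intros t _. unfold F, dF. auto_derive; auto.
        change (match q with 0%nat => 1 | S _ => INR q + 1 end) with (INR (S q)).
        change (match k with 0%nat => 1 | S _ => INR k + 1 end) with (INR (S k)).
        replace (1 + - t) with (1 - t) by ring. simpl pow. ring.
      + intros t _. apply (@ex_derive_continuous R_AbsRing R_NormedModule). unfold dF. auto_derive. auto. }
    pose proof (iR_minus _ _ 0 1 _ _ (iR_scal _ 0 1 (INR (S k)) _ (IH (S q))) H) as H2.
    pose proof (iR_scal _ 0 1 (/ INR (S q)) _ H2) as H3.
    assert (INR (S q) <> 0) by (apply not_0_INR; lia).
    eapply iR_ext; [|eapply iR_val; [exact H3|]].
    + intros t _. unfold dF. field. auto.
    + unfold F. replace (k + S q + 1)%nat with (S k + q + 1)%nat by lia.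
      rewrite !pow_i by lia. rewrite Rminus_diag, !pow_ne_zero by lia.
      rewrite !fact_simpl, !mult_INR.
      assert (INR (fact q) <> 0) by apply INR_fact_neq_0.
      assert (INR (fact (S k + q + 1)) <> 0) by apply INR_fact_neq_0.
      field; auto.
Qed.

Lemma pint p' k : is_RInt (fun t => (1-t)^(S p' - 1) * t^k) 0 1
  (1 / Binomial.C (k + S p') (S p') / INR (S p')).
Proof.
  eapply iR_val. { replace (S p' - 1)%nat with p' by lia. apply basic. }
  unfold Binomial.C. replace (k + S p' - S p')%nat with k by lia.
  replace (k + p' + 1)%nat with (k + S p')%nat by lia.
  rewrite (fact_simpl p'), mult_INR.
  assert (INR (fact p') <> 0) by apply INR_fact_neq_0.
  assert (INR (fact k) <> 0) by apply INR_fact_neq_0.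
  assert (INR (fact (k + S p')) <> 0) by apply INR_fact_neq_0.
  assert (INR (S p') <> 0) by (apply not_0_INR; lia).
  field. auto.
Qed.

Theorem mainTheorem15 (n p : nat) (x : R) :
  (1 <= p)%nat ->
  pBell_poly n p x =
  INR p * RInt (fun t => (1 - t) ^ (p - 1) * G n x t) 0 1.
Proof.
  intro Hp. destruct p as [|p']; [lia|].
  assert (Hn : INR (S p') <> 0) by (apply not_0_INR; lia).
  assert (H : is_RInt (fun t => (1 - t) ^ (S p' - 1) * G n x t) 0 1
                (pBell_poly n (S p') x / INR (S p'))).
  { apply (iR_ext (fun t => sum_f_R0 (fun k => (1 - t) ^ (S p' - 1) *
         (Binomial.C n k * bell_poly k t * x ^ (n - k))) n)).
    { intros t _. unfold G. rewrite (sum_scal ((1-t)^(S p' - 1))). reflexivity. }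
    eapply iR_val.
    { apply iR_sum. intro k.
      eapply iR_ext.
      { intros t _. instantiate (1 := fun t =>
           Binomial.C n k * x ^ (n - k) * ((1 - t) ^ (S p' - 1) * bell_poly k t)).
        simpl. ring. }
      apply iR_scal.
      apply (iR_ext (fun t => sum_f_R0 (fun j => (1 - t) ^ (S p' - 1) *
         (INR (stirling2 k j) * t ^ j)) k)).
      { intros t _. unfold bell_poly. rewrite (sum_scal ((1-t)^(S p' - 1))). reflexivity. }
      apply iR_sum. intro j.
      eapply iR_ext.
      { intros t _. instantiate (1 := fun t =>
           INR (stirling2 k j) * ((1 - t) ^ (S p' - 1) * t ^ j)).
        simpl. ring. }
      apply iR_scal. apply pint. }
    unfold pBell_poly, Rdiv. rewrite Rmult_comm, sum_scal. apply sum_eq. intros k _.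
    unfold pBell.
    transitivity (Binomial.C n k * x ^ (n - k) * (/ INR (S p') * sum_f_R0 (fun j => INR (stirling2 k j) / Binomial.C (j + S p') (S p')) k)); [| ring].
    f_equal. rewrite sum_scal. apply sum_eq. intros j _. unfold Rdiv. ring. }
  rewrite (is_RInt_unique _ _ _ _ H). field. exact Hn.
Qed.
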